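(* For $0<a_-<a_+<1$, $$\int\log x\ \pi_{a_-,a_+}(dx)=\frac{\sigma_+\log\sigma_++\sigma_-\log\sigma_--(\sigma_++\sigma_--1)\log(\sigma_++\sigma_--1)}{1-\sigma_+},$$ where $\sigma_\pm=\sigma_\pm(a_-,a_+)$.
   Context: For $(b,c)\in(0,1)^2$, $\sigma_\pm(b,c)=\frac12\big[1+\sqrt{bc}\pm\sqrt{(1-b)(1-c)}\big]$. For $0<a_-<a_+<1$, $\pi_{a_-,a_+}(dx)=C_{a_-,a_+}\frac{\sqrt{(x-a_-)(a_+-x)}}{2\pi x(1-x)}\mathbf 1_{[a_-,a_+]}(x)dx$ (generalized McKay distribution), with normalization $C_{a_-,a_+}^{-1}=\frac12\big[1-\sqrt{a_-a_+}-\sqrt{(1-a_-)(1-a_+)}\big]$. *)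

(* Defs.v *)
From Stdlib Require Import Reals.
From Coquelicot Require Import Coquelicot.
Open Scope R_scope.

Definition sigma_plus (b c : R) : R :=
  / 2 * (1 + sqrt (b * c) + sqrt ((1 - b) * (1 - c))).
Definition sigma_minus (b c : R) : R :=
  / 2 * (1 + sqrt (b * c) - sqrt ((1 - b) * (1 - c))).

Definition mckay_C (am ap : R) : R :=
  / (/ 2 * (1 - sqrt (am * ap) - sqrt ((1 - am) * (1 - ap)))).

(* Lebesgue density of pi_{a-,a+} on [a-,a+] (the measure is supported there) *)
Definition mckay_density (am ap x : R) : R :=
  mckay_C am ap * sqrt ((x - am) * (ap - x)) / (2 * PI * x * (1 - x)).

(* Main.v *)
Require Import Defs.
From Stdlib Require Import Reals Lra Psatz.
From Coquelicot Require Import Coquelicot.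
Open Scope R_scope.


Lemma psi_deriv (k t : R) : 0 < k < 1 ->
  is_derive (fun t => t + 2 * atan (k * sin t / (1 - k * cos t))) t
    ((1 - k*k) / (1 - 2*k*cos t + k*k)).
Proof.
  intros Hk.
  assert (Hc := COS_bound t).
  assert (H1 : sin t * sin t + cos t * cos t = 1) by (rewrite <- (sin2_cos2 t); unfold Rsqr; ring).
  assert (Hn : 1 - k * cos t > 0) by nra.
  assert (Hd : 1 - 2*k*cos t + k*k > 0) by nra.
  auto_derive. lra.
  set (s := sin t) in *. set (c := cos t) in *.
  assert (E: (1 + k * s * / (1 + - (k * c)) * (k * s * / (1 + - (k * c)) * 1))
     = (1-2*k*c+k*k) / ((1-k*c)*(1-k*c))).
  { field_simplify_eq. 2: lra.
    assert (Hs2 : s^2 = 1 - c^2) by nra. rewrite Hs2. ring. }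
  rewrite E. field_simplify_eq.
  2: split; lra.
  assert (Hs2 : s^2 = 1 - c^2) by nra. rewrite Hs2. ring.
Qed.

Lemma sin2_int (A p : R) : 0 < p -> p < A ->
  is_RInt (fun t => sin t ^ 2 / (A - p * cos t)) 0 PI
    (PI * (A - sqrt (A*A - p*p)) / (p*p)).
Proof.
  intros Hp HA.
  assert (HS0 : 0 < A*A - p*p) by nra.
  set (S := sqrt (A*A - p*p)).
  assert (HS : 0 < S) by (apply sqrt_lt_R0; lra).
  assert (HSS : S * S = A*A - p*p) by (apply sqrt_sqrt; lra).
  set (k := p / (A + S)).
  assert (Hk : 0 < k < 1).
  { unfold k; split. apply Rdiv_lt_0_compat; lra.
    apply (Rmult_lt_reg_r (A+S)). lra. field_simplify; lra. }
  set (F := fun t => (A*t + p*sin t - S*(t + 2*atan (k*sin t/(1-k*cos t))))/(p*p)).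
  assert (HD : forall t, is_derive F t (sin t ^ 2 / (A - p * cos t))).
  { intro t.
    assert (Hc := COS_bound t).
    assert (H1 : sin t * sin t + cos t * cos t = 1) by (rewrite <- (sin2_cos2 t); unfold Rsqr; ring).
    assert (Hden : A - p * cos t > 0) by nra.
    assert (Hd : 1 - 2*k*cos t + k*k > 0) by nra.
    pose proof (psi_deriv k t Hk) as Hpsi.
    assert (Hlin : is_derive (fun t => A*t + p*sin t) t (A + p*cos t)).
    { auto_derive; auto; ring. }
    assert (HF : is_derive (fun t => (A*t + p*sin t) + (-S) * (t + 2*atan (k*sin t/(1-k*cos t)))) t
               ((A + p*cos t) + (-S) * ((1 - k*k) / (1 - 2*k*cos t + k*k)))).
    { apply (is_derive_plus (fun t => A*t + p*sin t)). exact Hlin.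
      apply (is_derive_scal (fun t => t + 2 * atan (k * sin t / (1 - k * cos t)))). exact Hpsi. }
    pose proof (is_derive_scal _ t (/(p*p)) _ HF) as HF2.
    replace (sin t ^ 2 / (A - p * cos t)) with (scal (/(p*p)) ((A + p*cos t) + (-S) * ((1 - k*k) / (1 - 2*k*cos t + k*k)))).
    2:{ unfold scal; simpl; unfold mult; simpl.
        assert (Hkk : (1 - k*k) / (1 - 2*k*cos t + k*k) = S / (A - p * cos t)).
        { unfold k. field_simplify_eq. 2: { split; [lra|split; [lra|]]. assert (0 < A + S - p) by lra. nra. }
          replace (S^3) with (S*S^2) by ring.
          assert (HS2 : S^2 = A*A-p*p) by (rewrite <- HSS; ring). rewrite HS2. ring.
          }
        rewrite Hkk. field_simplify_eq. 2: split; lra.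
        assert (HS2 : S^2 = A*A-p*p) by (rewrite <- HSS; ring). rewrite HS2.
        assert (Hs2 : sin t^2 = 1 - cos t^2) by nra. rewrite Hs2. ring. }
    apply (is_derive_ext _ _ _ _ (fun u => eq_refl _) ) in HF2.
    eapply is_derive_ext; [| exact HF2].
    intro u. unfold F. unfold scal; simpl; unfold mult; simpl. unfold Rdiv; ring.
  }
  assert (HI : is_RInt (fun t => sin t ^ 2 / (A - p * cos t)) 0 PI (minus (F PI) (F 0))).
  { apply (is_RInt_derive F (fun t => sin t ^ 2 / (A - p * cos t))).
    - intros t _. apply HD.
    - intros t _. apply (@ex_derive_continuous R_AbsRing R_NormedModule).
      assert (Hc := COS_bound t). auto_derive. nra. }
  replace (PI * (A - S) / (p*p)) with (minus (F PI) (F 0)). exact HI.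
  unfold minus, plus, opp; simpl. unfold F.
  rewrite sin_PI, cos_PI, sin_0, cos_0.
  replace (k * 0 / (1 - k * -1)) with 0 by (field; lra).
  replace (k * 0 / (1 - k * 1)) with 0 by (field; lra).
  rewrite atan_0. fold S. field. lra.
Qed.


Definition Xf (a b t : R) := (a+b)/2 - (b-a)/2 * cos t.
Definition Wf (a b t : R) :=
  mckay_C a b * ((b-a)/2)^2 * sin t ^ 2 / (2*PI*Xf a b t*(1 - Xf a b t)).
Definition hf (a b s t : R) := ln (1 - s + s * Xf a b t) * Wf a b t.
Definition gf (a b s t : R) := (Xf a b t - 1) / (1 - s + s * Xf a b t) * Wf a b t.
Definition Phi (a b s : R) := RInt (hf a b s) 0 PI.

Lemma Xf_bounds a b t : a < b -> a <= Xf a b t <= b.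
Proof. intros. unfold Xf. pose proof (COS_bound t). nra. Qed.

Lemma pos_lin a b s t : 0 < a -> a < b -> b < 1 -> s * (1 - a) < 1 ->
  0 < 1 - s + s * Xf a b t.
Proof. intros. pose proof (Xf_bounds a b t). destruct (Rle_lt_dec 0 s); nra. Qed.

Lemma Xden a b t : 0 < a -> a < b -> b < 1 -> 2*PI*Xf a b t*(1 - Xf a b t) <> 0.
Proof. intros. pose proof (Xf_bounds a b t). pose proof PI_RGT_0.
  assert (0 < Xf a b t * (1 - Xf a b t)) by nra. nra. Qed.

Lemma exd_cont (f : R -> R) x : ex_derive f x -> continuity_pt f x.
Proof. intro H. apply continuity_pt_filterlim.
  apply (@ex_derive_continuous R_AbsRing R_NormedModule). exact H. Qed.

Lemma cont1d (f : R -> R) u v : continuity_pt f v -> continuity_2d_pt (fun _ v => f v) u v.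
Proof. intro H. apply (continuity_1d_2d_pt_comp f (fun _ v => v) u v H).
  apply continuity_2d_pt_id2. Qed.

Lemma Wf_exd a b t : 0 < a -> a < b -> b < 1 -> ex_derive (Wf a b) t.
Proof. intros. pose proof (Xden a b t H H0 H1). unfold Wf, Xf in *. auto_derive. auto. Qed.

Lemma Xf_exd a b t : ex_derive (Xf a b) t.
Proof. unfold Xf. auto_derive. auto. Qed.

Lemma hf_deriv a b s t : 0 < a -> a < b -> b < 1 -> s * (1 - a) < 1 ->
  is_derive (fun u => hf a b u t) s (gf a b s t).
Proof. intros. pose proof (pos_lin a b s t H H0 H1 H2).
  unfold hf, gf. auto_derive. lra. field. lra. Qed.

Lemma Phi_deriv a b s : 0 < a -> a < b -> b < 1 -> s * (1 - a) < 1 ->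
  is_derive (Phi a b) s (RInt (gf a b s) 0 PI).
Proof.
  intros Ha Hab Hb Hs.
  assert (HL : 0 < 1 - a) by lra.
  assert (Hsl : s < / (1 - a)).
  { apply (Rmult_lt_reg_r (1-a)); auto. rewrite Rinv_l; lra. }
  assert (Hloc : locally s (fun u => u * (1 - a) < 1)).
  { apply (locally_interval _ s m_infty (/(1-a))); simpl; auto.
    intros y _ Hy. apply (Rmult_lt_compat_r (1-a)) in Hy; auto.
    rewrite Rinv_l in Hy; lra. }
  unfold Phi.
  assert (Heq : RInt (gf a b s) 0 PI = RInt (fun t => Derive (fun u => hf a b u t) s) 0 PI).
  { apply RInt_ext. intros t _. symmetry. apply is_derive_unique. apply hf_deriv; auto. }
  rewrite Heq.
  apply (is_derive_RInt_param (fun u t => hf a b u t)).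
  - apply (filter_imp (fun u => u * (1 - a) < 1)); auto.
    intros u Hu t _. eexists. apply hf_deriv; auto.
  - intros t _.
    apply (continuity_2d_pt_ext_loc (gf a b)).
    + exists (mkposreal (/(1-a) - s) ltac:(lra)). intros u v Hu _. simpl in Hu.
      symmetry. apply is_derive_unique. apply hf_deriv; auto.
      assert (u < /(1-a)) by (apply Rabs_def2 in Hu; lra).
      apply (Rmult_lt_compat_r (1-a)) in H; auto. rewrite Rinv_l in H; lra.
    + apply (continuity_2d_pt_ext (fun u v => ((Xf a b v - 1) * Wf a b v) * / (1 - u + u * Xf a b v))).
      { intros u v. unfold gf. unfold Rdiv. ring. }
      apply continuity_2d_pt_mult.
      * apply (cont1d (fun v => (Xf a b v - 1) * Wf a b v)). apply exd_cont.
        apply ex_derive_mult. unfold Xf; auto_derive; auto.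
        apply Wf_exd; auto.
      * apply continuity_2d_pt_inv.
        apply continuity_2d_pt_plus. apply continuity_2d_pt_minus.
        apply continuity_2d_pt_const. apply continuity_2d_pt_id1.
        apply continuity_2d_pt_mult. apply continuity_2d_pt_id1.
        apply (cont1d (Xf a b)). apply exd_cont. apply Xf_exd.
        pose proof (pos_lin a b s t Ha Hab Hb Hs). lra.
  - apply (filter_imp (fun u => u * (1 - a) < 1)); auto.
    intros u Hu. apply (@ex_RInt_continuous R_CompleteNormedModule). intros t _.
    apply (@ex_derive_continuous R_AbsRing R_NormedModule).
    pose proof (pos_lin a b u t Ha Hab Hb Hu).
    unfold hf. apply ex_derive_mult.
    + auto_derive. split; [apply Xf_exd|split; auto].
    + apply Wf_exd; auto.
Qed.


Definition Qf (a b s : R) := (1 - s + s*a) * (1 - s + s*b).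
Definition Gf (a b s : R) :=
  mckay_C a b / 2 * (sqrt (a*b) / (1 - s) + / s - sqrt (Qf a b s) / (s * (1 - s))).

Lemma gf_int a b s : 0 < a -> a < b -> b < 1 -> 0 < s < 1 ->
  is_RInt (gf a b s) 0 PI (Gf a b s).
Proof.
  intros Ha Hab Hb Hs.
  set (c := (a+b)/2). set (r := (b-a)/2).
  assert (Hr : 0 < r) by (unfold r; lra).
  assert (H1 := sin2_int c r Hr ltac:(unfold c, r; lra)).
  set (A2 := 1 - s + s*c).
  assert (H2 := sin2_int A2 (s*r) ltac:(nra) ltac:(unfold A2, c, r; nra)).
  set (K := - (mckay_C a b * r * r / (2*PI*(1-s)))).
  pose proof PI_RGT_0 as HPI.
  assert (H3 := is_RInt_scal _ _ _ K _ (is_RInt_minus _ _ _ _ _ _ H1 (is_RInt_scal _ _ _ s _ H2))).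
  replace (Gf a b s) with (scal K (minus (PI * (c - sqrt (c * c - r * r)) / (r * r))
     (scal s (PI * (A2 - sqrt (A2 * A2 - s * r * (s * r))) / (s * r * (s * r)))))).
  - eapply is_RInt_ext; [|exact H3].
    intros t _. unfold gf, Wf. simpl.
    unfold scal, minus, plus, opp; simpl; unfold mult; simpl.
    pose proof (Xden a b t Ha Hab Hb).
    pose proof (Xf_bounds a b t Hab).
    assert (Hpos : 0 < 1 - s + s * Xf a b t) by (apply pos_lin; auto; nra).
    replace (c - r * cos t) with (Xf a b t) by (unfold Xf, c, r; ring).
    replace (A2 - s * r * cos t) with (1 - s + s * Xf a b t) by (unfold Xf, A2, c, r; ring).
    unfold K. fold r. field. repeat split; try lra.
  - unfold Gf, Qf, K. 
    unfold scal, minus, plus, opp; simpl; unfold mult; simpl.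
    assert (E1 : c * c - r * r = a * b) by (unfold c, r; field). rewrite E1.
    replace (A2 * A2 - s * r * (s * r)) with ((1 - s + s*a) * (1 - s + s*b)) by (unfold A2, c, r; field).
    unfold A2, c. fold r. field. repeat split; lra.
Qed.


Definition qf a b s := sqrt (Qf a b s).
Definition N0 a b s := 2 - ((1-a)+(1-b))*s + 2*qf a b s.
Definition N1 a b s := 2*(a*b) + (a*(1-b) + b*(1-a))*(1-s) + 2*sqrt(a*b)*qf a b s.
Definition M2 a b s := (1-a)+(1-b) - 2*((1-a)*(1-b))*s + 2*sqrt((1-a)*(1-b))*qf a b s.

Lemma Q_pos a b s : 0 < a -> a < b -> b < 1 -> 0 <= s <= 1 -> 0 < Qf a b s.
Proof. intros. unfold Qf. assert (0 < 1 - s + s*a) by nra. assert (0 < 1 - s + s*b) by nra. nra. Qed.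

Lemma L0 a b s : 0 < a -> a < b -> b < 1 -> 0 < s < 1 ->
  is_derive (fun s => ln (N0 a b s)) s ((qf a b s - 1)/(s * qf a b s)).
Proof.
  intros Ha Hab Hb Hs.
  assert (HQ := Q_pos a b s Ha Hab Hb ltac:(lra)).
  assert (Hq : 0 < qf a b s) by (apply sqrt_lt_R0; auto).
  assert (Hqq : qf a b s * qf a b s = Qf a b s) by (apply sqrt_sqrt; lra).
  assert (HN : 0 < N0 a b s) by (unfold N0; nra).
  unfold N0, qf, Qf in *. auto_derive.
  { repeat split; auto; lra. }
  change (1 + - s) with (1 - s).
  set (q := sqrt ((1 - s + s * a) * (1 - s + s * b))) in *.
  field_simplify_eq. 2: repeat split; lra.
  assert (Hq2 : q^2 = (1 - s + s * a) * (1 - s + s * b)) by (rewrite <- Hqq; ring).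
  assert (Hq3 : q^3 = q*((1 - s + s * a) * (1 - s + s * b))) by (rewrite <- Hqq; ring).
  try rewrite Hq3; try rewrite Hq2; ring.
Qed.

Ltac qfinish q g h Hqq Hgg Hhh :=
  let Q := match type of Hqq with _ = ?Q => Q end in
  let G := match type of Hgg with _ = ?G => G end in
  let H := match type of Hhh with _ = ?H => H end in
  assert (Hq2 : q^2 = Q) by (rewrite <- Hqq; ring);
  assert (Hq3 : q^3 = q*Q) by (rewrite <- Hqq; ring);
  assert (Hq4 : q^4 = Q*Q) by (rewrite <- Hqq; ring);
  assert (Hg2 : g^2 = G) by (rewrite <- Hgg; ring);
  assert (Hg3 : g^3 = g*G) by (rewrite <- Hgg; ring);
  assert (Hh2 : h^2 = H) by (rewrite <- Hhh; ring);
  assert (Hh3 : h^3 = h*H) by (rewrite <- Hhh; ring);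
  try rewrite Hq4; try rewrite Hq3; try rewrite Hq2;
  try rewrite Hg3; try rewrite Hg2; try rewrite Hh3; try rewrite Hh2; ring.

Lemma L1 a b s : 0 < a -> a < b -> b < 1 -> 0 < s < 1 ->
  is_derive (fun s => ln (N1 a b s)) s ((sqrt (a*b) - qf a b s)/(qf a b s * (1 - s))).
Proof.
  intros Ha Hab Hb Hs.
  assert (HQ := Q_pos a b s Ha Hab Hb ltac:(lra)).
  assert (Hq : 0 < qf a b s) by (apply sqrt_lt_R0; auto).
  assert (Hqq : qf a b s * qf a b s = Qf a b s) by (apply sqrt_sqrt; lra).
  assert (Hg : 0 < sqrt (a*b)) by (apply sqrt_lt_R0; nra).
  assert (Hgg : sqrt (a*b) * sqrt (a*b) = a*b) by (apply sqrt_sqrt; nra).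
  assert (Hh : 0 < sqrt ((1-a)*(1-b))) by (apply sqrt_lt_R0; nra).
  assert (Hhh : sqrt ((1-a)*(1-b)) * sqrt ((1-a)*(1-b)) = (1-a)*(1-b)) by (apply sqrt_sqrt; nra).
  assert (HN : 0 < N1 a b s) by (unfold N1; nra).
  unfold N1, qf, Qf in *. auto_derive.
  { repeat split; auto; lra. }
  change (1 + - s) with (1 - s).
  set (q := sqrt ((1 - s + s * a) * (1 - s + s * b))) in *.
  set (g := sqrt (a*b)) in *. set (h := sqrt ((1-a)*(1-b))) in *.
  field_simplify_eq. 2: repeat split; lra.
  qfinish q g h Hqq Hgg Hhh.
Qed.

Lemma L2 a b s : 0 < a -> a < b -> b < 1 -> 0 < s < 1 ->
  is_derive (fun s => ln (M2 a b s)) s (- sqrt ((1-a)*(1-b)) / qf a b s).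
Proof.
  intros Ha Hab Hb Hs.
  assert (HQ := Q_pos a b s Ha Hab Hb ltac:(lra)).
  assert (Hq : 0 < qf a b s) by (apply sqrt_lt_R0; auto).
  assert (Hqq : qf a b s * qf a b s = Qf a b s) by (apply sqrt_sqrt; lra).
  assert (Hg : 0 < sqrt (a*b)) by (apply sqrt_lt_R0; nra).
  assert (Hgg : sqrt (a*b) * sqrt (a*b) = a*b) by (apply sqrt_sqrt; nra).
  assert (Hh : 0 < sqrt ((1-a)*(1-b))) by (apply sqrt_lt_R0; nra).
  assert (Hhh : sqrt ((1-a)*(1-b)) * sqrt ((1-a)*(1-b)) = (1-a)*(1-b)) by (apply sqrt_sqrt; nra).
  assert (HN : 0 < M2 a b s) by (unfold M2; nra).
  unfold M2, qf, Qf in *. auto_derive.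
  { repeat split; auto; lra. }
  change (1 + - s) with (1 - s).
  set (q := sqrt ((1 - s + s * a) * (1 - s + s * b))) in *.
  set (g := sqrt (a*b)) in *. set (h := sqrt ((1-a)*(1-b))) in *.
  field_simplify_eq. 2: repeat split; lra.
  qfinish q g h Hqq Hgg Hhh.
Qed.

Definition Hf a b s := mckay_C a b / 2 *
  (ln (N0 a b s) - sqrt (a*b) * ln (N1 a b s) - sqrt ((1-a)*(1-b)) * ln (M2 a b s)).

Lemma Hf_deriv a b s : 0 < a -> a < b -> b < 1 -> 0 < s < 1 ->
  is_derive (Hf a b) s (Gf a b s).
Proof.
  intros Ha Hab Hb Hs.
  pose proof (L0 a b s Ha Hab Hb Hs) as D0.
  pose proof (L1 a b s Ha Hab Hb Hs) as D1.
  pose proof (L2 a b s Ha Hab Hb Hs) as D2.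
  set (f0 := fun s => ln (N0 a b s)) in *.
  set (f1 := fun s => ln (N1 a b s)) in *.
  set (f2 := fun s => ln (M2 a b s)) in *.
  set (K := mckay_C a b / 2).
  set (g := sqrt (a*b)) in *. set (h := sqrt ((1-a)*(1-b))) in *.
  assert (HD : is_derive (fun s => K * (f0 s - g * f1 s - h * f2 s)) s
     (K * ((qf a b s - 1)/(s * qf a b s) - g * ((g - qf a b s)/(qf a b s * (1 - s)))
           - h * (- h / qf a b s)))).
  { auto_derive.
    - repeat split; eexists; eauto.
    - change (fun x : R => f0 x) with f0. change (fun x : R => f1 x) with f1. change (fun x : R => f2 x) with f2.
      rewrite (is_derive_unique f0 s _ D0), (is_derive_unique f1 s _ D1), (is_derive_unique f2 s _ D2).
      ring. }
  replace (Gf a b s) with (K * ((qf a b s - 1)/(s * qf a b s) - g * ((g - qf a b s)/(qf a b s * (1 - s)))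
           - h * (- h / qf a b s))).
  { eapply is_derive_ext; [|exact HD].
    intro u. unfold Hf, f0, f1, f2, K, g, h. reflexivity. }
  - assert (HQ := Q_pos a b s Ha Hab Hb ltac:(lra)).
    assert (Hq : 0 < qf a b s) by (apply sqrt_lt_R0; auto).
    assert (Hqq : qf a b s * qf a b s = Qf a b s) by (apply sqrt_sqrt; lra).
    assert (Hgg : g * g = a*b) by (apply sqrt_sqrt; nra).
    assert (Hhh : h * h = (1-a)*(1-b)) by (apply sqrt_sqrt; nra).
    unfold Gf, K. fold g. fold (qf a b s).
    set (q := qf a b s) in *. unfold Qf in Hqq.
    field_simplify_eq. 2: repeat split; lra.
    qfinish q g h Hqq Hgg Hhh.
Qed.

Lemma Hf_cont a b s : 0 < a -> a < b -> b < 1 -> 0 <= s <= 1 ->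
  continuity_pt (Hf a b) s.
Proof.
  intros Ha Hab Hb Hs.
  assert (HQ := Q_pos a b s Ha Hab Hb Hs).
  assert (Hq : 0 < qf a b s) by (apply sqrt_lt_R0; auto).
  assert (Hg : 0 < sqrt (a*b)) by (apply sqrt_lt_R0; nra).
  assert (Hh : 0 < sqrt ((1-a)*(1-b))) by (apply sqrt_lt_R0; nra).
  assert (HN0 : 0 < N0 a b s) by (unfold N0; nra).
  assert (HN1 : 0 < N1 a b s).
  { unfold N1. assert (0 <= (a*(1-b) + b*(1-a))*(1-s)) by (apply Rmult_le_pos; nra).
    assert (0 < sqrt (a*b) * qf a b s) by (apply Rmult_lt_0_compat; auto). nra. }
  assert (HM2 : 0 < M2 a b s).
  { unfold M2. assert (0 < sqrt ((1-a)*(1-b)) * qf a b s) by (apply Rmult_lt_0_compat; auto).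
    assert (((1-a)*(1-b))*s <= (1-a)*(1-b)) by (assert (0 < (1-a)*(1-b)) by nra; nra). nra. }
  apply exd_cont. unfold Hf, N0, N1, M2, qf, Qf in *.
  auto_derive. repeat split; auto.
Qed.


Lemma final_alg a b : 0 < a -> a < b -> b < 1 ->
  let sp := sigma_plus a b in
  let sm := sigma_minus a b in
  Hf a b 1 - Hf a b 0 =
  (sp * ln sp + sm * ln sm - (sp + sm - 1) * ln (sp + sm - 1)) / (1 - sp).
Proof.
  intros Ha Hab Hb sp sm.
  assert (Hg : 0 < sqrt (a*b)) by (apply sqrt_lt_R0; nra).
  assert (Hgg : sqrt (a*b) * sqrt (a*b) = a*b) by (apply sqrt_sqrt; nra).
  assert (Hh : 0 < sqrt ((1-a)*(1-b))) by (apply sqrt_lt_R0; nra).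
  assert (Hhh : sqrt ((1-a)*(1-b)) * sqrt ((1-a)*(1-b)) = (1-a)*(1-b)) by (apply sqrt_sqrt; nra).
  assert (Hq1 : qf a b 1 = sqrt (a*b)) by (unfold qf, Qf; f_equal; ring).
  assert (Hq0 : qf a b 0 = 1) by (unfold qf, Qf; replace ((1 - 0 + 0 * a) * (1 - 0 + 0 * b)) with 1 by ring; apply sqrt_1).
  unfold Hf, N0, N1, M2. rewrite Hq1, Hq0.
  unfold sp, sm, sigma_plus, sigma_minus, mckay_C in *.
  set (g := sqrt (a*b)) in *. set (h := sqrt ((1-a)*(1-b))) in *.
  assert (Hh1 : h < 1).
  { assert ((1-a)*(1-b) < 1) by nra. nra. }
  set (p := /2 * (1 + g + h)). set (m := /2 * (1 + g - h)).
  assert (Hp : 0 < p) by (unfold p; lra).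
  assert (Hm : 0 < m) by (unfold m; lra).
  replace (p + m - 1) with g by (unfold p, m; field).
  assert (E1 : 2 - (1 - a + (1 - b)) * 1 + 2 * g = 4 * (p * m)).
  { unfold p, m. nra. }
  assert (E2 : 2 * (a * b) + (a * (1 - b) + b * (1 - a)) * (1 - 1) + 2 * g * g = 4 * (g * g)).
  { nra. }
  assert (E3 : 2 - (1 - a + (1 - b)) * 0 + 2 * 1 = 4) by ring.
  assert (E4 : 2 * (a * b) + (a * (1 - b) + b * (1 - a)) * (1 - 0) + 2 * g * 1 = 4 * (p * m)).
  { unfold p, m. nra. }
  set (M0 := 1 - a + (1 - b) - 2 * ((1 - a) * (1 - b)) * 0 + 2 * h * 1).
  assert (HM0 : 0 < M0) by (unfold M0; nra).
  assert (E5 : 1 - a + (1 - b) - 2 * ((1 - a) * (1 - b)) * 1 + 2 * h * g = M0 * (m * / p)).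
  { unfold M0, m, p. field_simplify_eq. 2: lra.
    assert (Hg2 : g^2 = a*b) by (rewrite <- Hgg; ring).
    assert (Hh2 : h^2 = (1-a)*(1-b)) by (rewrite <- Hhh; ring).
    rewrite Hg2, Hh2. ring. }
  rewrite E1, E2, E3, E4, E5.
  assert (L1 : ln (4*(p*m)) = ln 4 + ln p + ln m).
  { rewrite ln_mult, ln_mult; auto; try lra; nra. }
  assert (L2 : ln (4*(g*g)) = ln 4 + ln g + ln g).
  { rewrite ln_mult, ln_mult; auto; try lra; nra. }
  assert (L5 : ln (M0*(m*/p)) = ln M0 + ln m - ln p).
  { rewrite ln_mult, ln_mult, ln_Rinv; auto; try lra.
    apply Rinv_0_lt_compat; auto. apply Rmult_lt_0_compat; auto. apply Rinv_0_lt_compat; auto. }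
  rewrite L1, L2, L5.
  replace (1 - p) with (/2*(1-g-h)) by (unfold p; field).
  assert (Hlt : g + h < 1).
  { assert (HP2 : (g*h)*(g*h) = (a*b)*((1-a)*(1-b))) by (rewrite <- Hgg, <- Hhh; ring).
    assert (HS : 0 < a*(1-b) + b*(1-a)) by nra.
    assert (H4 : 4*((g*h)*(g*h)) < (a*(1-b) + b*(1-a))*(a*(1-b) + b*(1-a))).
    { rewrite HP2. nra. }
    assert (HP : 0 < g*h) by nra.
    assert (H2P : 2*(g*h) < a*(1-b) + b*(1-a)) by nra.
    nra. }
  unfold p, m. field. lra.
Qed.


Lemma theta_int a b : 0 < a -> a < b -> b < 1 ->
  is_RInt (fun t => ln (Xf a b t) * Wf a b t) 0 PI (Hf a b 1 - Hf a b 0).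
Proof.
  intros Ha Hab Hb.
  set (F := fun s => Phi a b s - Hf a b s).
  destruct (MVT_gen F 0 1 (fun _ => 0)) as [c [Hc HF]].
  - intros x Hx. rewrite Rmin_left in Hx by lra. rewrite Rmax_right in Hx by lra.
    assert (Hx1 : x * (1 - a) < 1) by nra.
    pose proof (Phi_deriv a b x Ha Hab Hb Hx1) as D1.
    rewrite (is_RInt_unique _ _ _ _ (gf_int a b x Ha Hab Hb Hx)) in D1.
    pose proof (Hf_deriv a b x Ha Hab Hb Hx) as D2.
    pose proof (is_derive_minus _ _ _ _ _ D1 D2) as D.
    replace 0 with (minus (Gf a b x) (Gf a b x)).
    + exact D.
    + unfold minus, plus, opp; simpl. ring.
  - intros x Hx. rewrite Rmin_left in Hx by lra. rewrite Rmax_right in Hx by lra.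
    apply continuity_pt_minus.
    + apply exd_cont. eexists. apply Phi_deriv; auto. nra.
    + apply Hf_cont; auto.
  - assert (HP0 : Phi a b 0 = 0).
    { unfold Phi. rewrite (RInt_ext _ (fun _ => 0)).
      - rewrite RInt_const. apply Rmult_0_r.
      - intros t _. unfold hf. replace (1 - 0 + 0 * Xf a b t) with 1 by ring. rewrite ln_1. apply Rmult_0_l. }
    assert (HP1 : Phi a b 1 = RInt (fun t => ln (Xf a b t) * Wf a b t) 0 PI).
    { unfold Phi. apply RInt_ext. intros t _. unfold hf.
      replace (1 - 1 + 1 * Xf a b t) with (Xf a b t) by ring. reflexivity. }
    assert (Hex : ex_RInt (fun t => ln (Xf a b t) * Wf a b t) 0 PI).
    { apply (@ex_RInt_continuous R_CompleteNormedModule). intros t _.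
      apply (@ex_derive_continuous R_AbsRing R_NormedModule).
      pose proof (Xf_bounds a b t Hab).
      apply ex_derive_mult.
      + unfold Xf in *. auto_derive. lra.
      + apply Wf_exd; auto. }
    replace (Hf a b 1 - Hf a b 0) with (RInt (fun t => ln (Xf a b t) * Wf a b t) 0 PI).
    + apply (@RInt_correct R_CompleteNormedModule); auto.
    + unfold F in HF. rewrite HP0, HP1 in HF. lra.
Qed.


Lemma f0_cont a b x : 0 < a -> a < b -> b < 1 -> a <= x <= b ->
  continuous (fun x => ln x * mckay_density a b x) x.
Proof.
  intros Ha Hab Hb Hx.
  apply continuity_pt_filterlim.
  unfold mckay_density.
  pose proof PI_RGT_0.
  apply continuity_pt_mult.
  - apply exd_cont. auto_derive. lra.
  - apply continuity_pt_div.
    + apply continuity_pt_mult. apply continuity_pt_const. intros u v; reflexivity.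
      apply (continuity_pt_comp (fun x => (x - a) * (b - x)) sqrt).
      * apply exd_cont. auto_derive. auto.
      * apply continuity_pt_sqrt. nra.
    + apply exd_cont. auto_derive. auto.
    + assert (0 < x * (1 - x)) by nra. nra.
Qed.

Theorem proposition4p2 (am ap : R) :
  0 < am -> am < ap -> ap < 1 ->
  let sp := sigma_plus am ap in
  let sm := sigma_minus am ap in
  is_RInt (fun x => ln x * mckay_density am ap x) am ap
    ((sp * ln sp + sm * ln sm - (sp + sm - 1) * ln (sp + sm - 1)) / (1 - sp)).
Proof.
  intros Ha Hab Hb sp sm.
  unfold sp, sm. rewrite <- (final_alg am ap Ha Hab Hb).
  set (a := am) in *. set (b := ap) in *. clearbody a b.
  set (f0 := fun x => ln x * mckay_density a b x).
  assert (Hcomp := is_RInt_comp f0 (Xf a b) (fun t => (b-a)/2 * sin t) 0 PI).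
  assert (HX0 : Xf a b 0 = a) by (unfold Xf; rewrite cos_0; field).
  assert (HXP : Xf a b PI = b) by (unfold Xf; rewrite cos_PI; field).
  pose proof PI_RGT_0 as HPI.
  rewrite HX0, HXP in Hcomp.
  assert (Hc : is_RInt (fun y => scal ((b - a) / 2 * sin y) (f0 (Xf a b y))) 0 PI (RInt f0 a b)).
  { apply Hcomp.
    - intros x _. apply f0_cont; auto. apply Xf_bounds; auto.
    - intros x _. split.
      + unfold Xf. auto_derive. auto. ring.
      + apply (@ex_derive_continuous R_AbsRing R_NormedModule). auto_derive. auto. }
  assert (HV : RInt f0 a b = Hf a b 1 - Hf a b 0).
  { apply (@is_RInt_unique R_CompleteNormedModule) in Hc. rewrite <- Hc. apply (@is_RInt_unique R_CompleteNormedModule).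
    eapply is_RInt_ext; [|apply theta_int; auto].
    intros t Ht. rewrite Rmin_left in Ht by lra. rewrite Rmax_right in Ht by lra.
    assert (Hs : 0 < sin t) by (apply sin_gt_0; lra).
    pose proof (Xden a b t Ha Hab Hb).
    unfold f0, mckay_density, Wf, scal; simpl; unfold mult; simpl.
    replace ((Xf a b t - a) * (b - Xf a b t)) with (Rsqr ((b-a)/2 * sin t)).
    2: { unfold Rsqr, Xf. pose proof (sin2_cos2 t) as E. unfold Rsqr in E.
         replace ((b - a) / 2 * sin t * ((b - a) / 2 * sin t)) with ((b - a) / 2 * ((b - a) / 2) * (sin t * sin t)) by ring.
         replace (sin t * sin t) with (1 - cos t * cos t) by lra. field. }
    rewrite sqrt_Rsqr by (apply Rmult_le_pos; lra).
    field. pose proof (Xf_bounds a b t Hab). repeat split; lra. }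
  rewrite <- HV. apply (@RInt_correct R_CompleteNormedModule).
  apply (@ex_RInt_continuous R_CompleteNormedModule).
  intros z Hz. rewrite Rmin_left in Hz by lra. rewrite Rmax_right in Hz by lra.
  apply f0_cont; auto.
Qed.
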